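(* Let $n\ge 2$ be an integer, let $\pi(x)$ denote the number of primes $\le x$ for real $x\ge 0$, and let $\omega(n)$ denote the number of distinct prime factors of $n$. Then $$\omega(n)=\sum_{i=1}^{\lfloor n/2\rfloor}\left[\pi\left(\frac{n}{i}\right)-\pi\left(\frac{n-1}{i}\right)\right].$$ *)

(* Defs.v *)
From mathcomp Require Import all_boot all_order all_algebra.
From mathcomp Require Import reals.
Set Implicit Arguments. Unset Strict Implicit. Unset Printing Implicit Defensive.
Import Order.TTheory GRing.Theory Num.Theory.
Local Open Scope ring_scope.

(* Since p <= x iff p <= floor x
   for naturals p (and x >= 0), this counts primes p < (truncn x).+1. *)
Definition primepi {R : archiFieldType} (x : R) : nat :=
  #|[set p : 'I_(Num.truncn x).+1 | prime p]|.

Definition omega (n : nat) : nat := size (primes n).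

(* Main.v *)
Require Import Defs.
From mathcomp Require Import all_boot all_order all_algebra.
From mathcomp Require Import reals.
Import Order.TTheory GRing.Theory Num.Theory.
Local Open Scope ring_scope.

Lemma trunc_div (R : realType) (m i : nat) : (0 < i)%N ->
  Num.truncn (m%:R / i%:R : R) = (m %/ i)%N.
Proof.
move=> i0; apply: truncn_def.
have ip : (0 : R) < i%:R by rewrite ltr0n.
rewrite ler_pdivlMr // ltr_pdivrMr // -!natrM ler_nat ltr_nat.
by rewrite leq_divM ltn_ceil.
Qed.

Definition pc (k : nat) : nat := #|[set p : 'I_k.+1 | prime p]|.

Lemma pcE k : pc k = count prime (iota 0 k.+1).
Proof.
rewrite /pc -sum1dep_card.
rewrite -(big_mkord (fun p : nat => prime p) (fun=> 1%N)) /index_iota subn0.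
by rewrite sum1_count.
Qed.

Lemma pcS k : pc k.+1 = (pc k + prime k.+1)%N.
Proof. by rewrite !pcE -addn1 iotaD count_cat /= addn0. Qed.

Lemma term (R : realType) (n i : nat) : (1 <= n)%N -> (0 < i)%N ->
  ((primepi (n%:R / i%:R : R))%:Z - (primepi ((n%:R - 1) / i%:R : R))%:Z)
  = (((i %| n) && prime (n %/ i))%N : nat)%:Z.
Proof.
move=> n1 i0.
have -> : (n%:R - 1 : R) = (n.-1)%:R by case: n n1 => // n _; rewrite -natr1 addrK.
rewrite /primepi !trunc_div //.
rewrite -/(pc (n %/ i)) -/(pc (n.-1 %/ i)).
case: n n1 => // n _ /=.
rewrite (divnS _ i0).
case: (i %| n.+1)%N => /=.
  by rewrite add1n pcS addnC PoszD addrK.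
by rewrite add0n subrr.
Qed.

Lemma divdiv n i : (0 < n)%N -> (i %| n)%N -> (n %/ (n %/ i))%N = i.
Proof. by move=> n0 d; rewrite divnA // mulKn. Qed.

Lemma countP n : (2 <= n)%N ->
  count (fun i => (i %| n) && prime (n %/ i))%N (iota 1 (n %/ 2)) = size (primes n).
Proof.
move=> n2; have n0 : (0 < n)%N by apply: leq_trans n2.
set P := (fun i => _).
rewrite -size_filter -(size_map (fun i => n %/ i)%N).
apply/perm_size/uniq_perm; [|exact: primes_uniq|].
- rewrite map_inj_in_uniq ?filter_uniq ?iota_uniq //.
  move=> i j; rewrite !mem_filter /P => /andP[/andP[di _] _] /andP[/andP[dj _] _] e.
  by rewrite -(@divdiv n i n0 di) e divdiv.
- move=> p; rewrite mem_primes n0 /=; apply/mapP/idP.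
  + case=> i; rewrite mem_filter mem_iota /P => /andP[/andP[di pi] /andP[i1 _]] ->.
    by rewrite pi dvdn_div.
  + case/andP=> pp dp; exists (n %/ p)%N; last by rewrite divdiv.
    rewrite mem_filter /P divdiv // pp dvdn_div // mem_iota /=.
    have p0 : (0 < p)%N by apply: prime_gt0.
    rewrite divn_gt0 // dvdn_leq //= add1n ltnS.
    by apply: leq_div2l => //; apply: prime_gt1.
Qed.

Theorem mainTheorem5 (R : realType) (n : nat) (hn : (2 <= n)%N) :
  (omega n)%:Z =
  \sum_(1 <= i < (n %/ 2).+1)
     ((primepi (n%:R / i%:R : R))%:Z - (primepi ((n%:R - 1) / i%:R : R))%:Z).
Proof.
have n1 : (1 <= n)%N by apply: leq_trans hn.
rewrite big_nat (eq_bigr (fun i => (((i %| n) && prime (n %/ i))%N : nat)%:Z)); last first.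
  by move=> i /andP[i1 _]; rewrite term.
rewrite -big_nat /omega -(@countP n hn) -sum1_count.
rewrite big_mkcond /= /index_iota subSS subn0.
rewrite (big_morph Posz PoszD (erefl (Posz 0))).
by apply: eq_bigr => i _; case: ifP.
Qed.
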